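(* Let $V$ be a finite set and let $\Pi=\{\mathcal{P}_1,\mathcal{P}_2,\mathcal{P}_3\}$ be a homogeneous $3$-scheme on $V$. Then $(V,\mathcal{P}_2\cup\{1\})$ is an association scheme, where $1=\{(v,v)\mid v\in V\}$ is the identity relation.
   Context: For a finite set $V$ and $s\geq1$, let $V^{(s)}$ be the set of $s$-tuples of pairwise distinct elements of $V$. For $s>1$ and $1\leq i\leq s$, $\pi^s_i:V^{(s)}\to V^{(s-1)}$ deletes the $i$-th coordinate. $\mathrm{Symm}_s$ acts on $V^{(s)}$ by $(v_1,\dots,v_s)^\tau=(v_{1^\tau},\dots,v_{s^\tau})$. An $m$-collection on $V$ is a set $\Pi=\{\mathcal{P}_1,\dots,\mathcal{P}_m\}$ where $\mathcal{P}_s$ is a partition of $V^{(s)}$; its classes are called colors. It is an $m$-scheme if for every $1<s\leq m$: (compatibility) whenever $\bar u,\bar v$ lie in the same color of $\mathcal{P}_s$, for every $i$ the tuples $\pi^s_i(\bar u),\pi^s_i(\bar v)$ lie in the same color of $\mathcal{P}_{s-1}$; (regularity) whenever $\bar u,\bar v$ lie in the same color of $\mathcal{P}_{s-1}$, for every $1\leq i\leq s$ and every $P\in\mathcal{P}_s$, $\#\{\bar u'\in P\mid \pi^s_i(\bar u')=\bar u\}=\#\{\bar v'\in P\mid\pi^s_i(\bar v')=\bar v\}$; (invariance) for every $P\in\mathcal{P}_s$ and $\tau\in\mathrm{Symm}_s$, $P^\tau:=\{\bar v^\tau\mid \bar v\in P\}\in\mathcal{P}_s$. It is homogeneous if $|\mathcal{P}_1|=1$.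 An association scheme is a pair $(X,G)$ with $X$ finite and $G$ a partition of $X\times X$ containing the identity relation $1$, closed under $g\mapsto g^*:=\{(y,x)\mid(x,y)\in g\}$, and such that for all $f,g,h\in G$ the number $\#\{\gamma\in X\mid(\alpha,\gamma)\in f,(\gamma,\beta)\in g\}$ is the same for all $(\alpha,\beta)\in h$. *)

(* Defs.v *)
From mathcomp Require Import all_boot all_fingroup.
Set Implicit Arguments. Unset Strict Implicit. Unset Printing Implicit Defensive.

Section Schemes.
Variable V : finType.

Definition dtuples (s : nat) : {set s.-tuple V} := [set t : s.-tuple V | uniq t].

Definition deltup (k : nat) (t : k.+1.-tuple V) (i : 'I_k.+1) : k.-tuple V :=
  [tuple tnth t (lift i j) | j < k].

Definition permtup (s : nat) (tau : 'S_s) (t : s.-tuple V) : s.-tuple V :=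
  [tuple tnth t (tau j) | j < s].

Definition same_color (T : finType) (Ps : {set {set T}}) (x y : T) : bool :=
  [exists Q in Ps, (x \in Q) && (y \in Q)].

Definition is_collection (m : nat) (P : forall s, {set {set s.-tuple V}}) : Prop :=
  forall s, 1 <= s <= m -> partition (P s) (dtuples s).

Definition compatibility (k : nat) (P : forall s, {set {set s.-tuple V}}) : Prop :=
  forall (u v : k.+1.-tuple V), same_color (P k.+1) u v ->
    forall i : 'I_k.+1, same_color (P k) (deltup u i) (deltup v i).

Definition regularity (k : nat) (P : forall s, {set {set s.-tuple V}}) : Prop :=
  forall (u v : k.-tuple V), same_color (P k) u v ->
    forall (i : 'I_k.+1) (C : {set k.+1.-tuple V}), C \in P k.+1 ->
      #|[set u' in C | deltup u' i == u]| = #|[set v' in C | deltup v' i == v]|.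

Definition invariance (s : nat) (P : forall s, {set {set s.-tuple V}}) : Prop :=
  forall (C : {set s.-tuple V}), C \in P s ->
    forall tau : 'S_s, [set permtup tau t | t in C] \in P s.

(* m-scheme: conditions for every 1 < s <= m, written s = k.+1 *)
Definition is_scheme (m : nat) (P : forall s, {set {set s.-tuple V}}) : Prop :=
  is_collection m P /\
  forall k, 1 <= k -> k.+1 <= m ->
    [/\ compatibility k P, regularity k P & invariance k.+1 P].

Definition homogeneous (P : forall s, {set {set s.-tuple V}}) : Prop :=
  #|P 1| = 1.

Definition rel_of_color (C : {set 2.-tuple V}) : {set V * V} :=
  [set (tnth t ord0, tnth t ord_max) | t in C].

End Schemes.

Section AssocScheme.
Variable X : finType.

Definition id_rel : {set X * X} := [set xy | xy.1 == xy.2].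

Definition transpose_rel (g : {set X * X}) : {set X * X} :=
  [set xy | (xy.2, xy.1) \in g].

Definition is_association_scheme (G : {set {set X * X}}) : Prop :=
  [/\ partition G [set: X * X],
      id_rel \in G,
      (forall g, g \in G -> transpose_rel g \in G) &
      (forall f g h, f \in G -> g \in G -> h \in G ->
         forall a b a' b', (a, b) \in h -> (a', b') \in h ->
           #|[set c | ((a, c) \in f) && ((c, b) \in g)]| =
           #|[set c | ((a', c) \in f) && ((c, b') \in g)]|)].
End AssocScheme.

(* Main.v *)
Require Import Defs.
From mathcomp Require Import all_boot all_fingroup.
Set Implicit Arguments. Unset Strict Implicit. Unset Printing Implicit Defensive.

Lemma card_split (T:finType) (P : {set {set T}}) (D S : {set T}) :
  partition P D -> S \subset D -> #|S| = \sum_(B in P) #|S :&: B|.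
Proof.
move=> pP sSD.
have tP := partition_trivIset pP; have cP := cover_partition pP.
rewrite -sum1_card (partition_big (pblock P) (mem P)) /=; last first.
  by move=> t tS; apply: pblock_mem; rewrite cP (subsetP sSD).
apply: eq_bigr => B PB; rewrite -sum1_card; apply: eq_bigl => t.
rewrite inE; case tS: (t \in S) => //=.
apply/eqP/idP => [<-|tB]; first by rewrite mem_pblock cP (subsetP sSD).
exact: def_pblock.
Qed.

Lemma block_eq (T:finType) (P : {set {set T}}) (D A B : {set T}) x :
  partition P D -> A \in P -> B \in P -> x \in A -> x \in B -> A = B.
Proof.
move=> pP PA PB xA xB; have tP := partition_trivIset pP.
by rewrite -(def_pblock tP PA xA) (def_pblock tP PB xB).
Qed.

Lemma same_color_mem (T:finType) (P : {set {set T}}) (D C : {set T}) x y :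
  partition P D -> C \in P -> same_color P x y -> (x \in C) = (y \in C).
Proof.
move=> pP PC /existsP[Q /andP[PQ /andP[xQ yQ]]].
apply/idP/idP => H.
  by rewrite (block_eq pP PC PQ H xQ).
by rewrite (block_eq pP PC PQ H yQ).
Qed.

Lemma const_card (T:finType) (A : {set T}) (q q' p : pred T) :
  {in A &, forall t t', p t = p t'} ->
  #|[set t in A | q t]| = #|[set t in A | q' t]| ->
  #|[set t in A | q t && p t]| = #|[set t in A | q' t && p t]|.
Proof.
move=> cst E.
case: (boolP [exists t in A, p t]) => [/existsP[t0 /andP[t0A pt0]]|/existsPn np].
  have pA t : t \in A -> p t by move=> tA; rewrite (cst t t0).
  rewrite (_ : [set t in A | q t && p t] = [set t in A | q t]); last first.
    by apply/setP => t; rewrite !inE; case tA: (t \in A); rewrite //= ?pA ?andbT.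
  rewrite (_ : [set t in A | q' t && p t] = [set t in A | q' t]) //.
  by apply/setP => t; rewrite !inE; case tA: (t \in A); rewrite //= ?pA ?andbT.
rewrite (_ : [set t in A | q t && p t] = set0); last first.
  by apply/setP => t; rewrite !inE; case tA: (t \in A) => //=; move: (np t); rewrite tA /= => /negbTE ->; rewrite andbF.
rewrite (_ : [set t in A | q' t && p t] = set0) //.
by apply/setP => t; rewrite !inE; case tA: (t \in A) => //=; move: (np t); rewrite tA /= => /negbTE ->; rewrite andbF.
Qed.

Section S.
Variable V : finType.
Definition mk1 (x : V) : 1.-tuple V := [tuple x].
Definition mk2 (x y : V) : 2.-tuple V := [tuple x; y].
Definition mk3 (x y z : V) : 3.-tuple V := [tuple x; y; z].

Lemma tuple2E (u : 2.-tuple V) : u = mk2 (tnth u ord0) (tnth u ord_max).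
Proof. case: u => -[|x [|y []]] //= Hs; by apply: val_inj. Qed.

Lemma tuple3E (u : 3.-tuple V) : exists x y z, u = mk3 x y z.
Proof. case: u => -[|x [|y [|z []]]] //= Hs; exists x, y, z; by apply: val_inj. Qed.

Lemma mk1_inj x y : mk1 x = mk1 y -> x = y.
Proof. by move/(congr1 val) => [->]. Qed.
Lemma mk2_inj x y x' y' : mk2 x y = mk2 x' y' -> x = x' /\ y = y'.
Proof. by move/(congr1 val) => [-> ->]. Qed.

Lemma del3_0 x y z : deltup (mk3 x y z) ord0 = mk2 y z.
Proof. by apply: eq_from_tnth => -[[|[|]] Hi] //; rewrite tnth_mktuple. Qed.
Lemma del3_1 x y z : deltup (mk3 x y z) (inord 1) = mk2 x z.
Proof. by apply: eq_from_tnth => -[[|[|]] Hi] //; rewrite tnth_mktuple !(tnth_nth x) /= /bump inordK. Qed.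
Lemma del3_2 x y z : deltup (mk3 x y z) ord_max = mk2 x y.
Proof. by apply: eq_from_tnth => -[[|[|]] Hi] //; rewrite tnth_mktuple. Qed.
Lemma del2_1 x y : deltup (mk2 x y) ord_max = mk1 x.
Proof. by apply: eq_from_tnth => -[[|] Hi] //; rewrite tnth_mktuple. Qed.

Definition sw : 'S_2 := tperm ord0 ord_max.
Lemma permtup_sw x y : permtup sw (mk2 x y) = mk2 y x.
Proof. by apply: eq_from_tnth => -[[|[|]] Hi] //; rewrite tnth_mktuple /sw permE. Qed.

Lemma rel_of_colorE (C : {set 2.-tuple V}) x y : ((x, y) \in rel_of_color C) = (mk2 x y \in C).
Proof.
apply/imsetP/idP => [[t tC [-> ->]]|H]; first by rewrite -tuple2E.
by exists (mk2 x y).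
Qed.
End S.

Section Main.
Variable V : finType.
Variable P : forall s, {set {set s.-tuple V}}.
Hypothesis HS : is_scheme 3 P.
Hypothesis HH : homogeneous P.

Let p1 : partition (P 1) (dtuples V 1). Proof. by case: HS => c _; apply: c. Qed.
Let p2 : partition (P 2) (dtuples V 2). Proof. by case: HS => c _; apply: c. Qed.
Let p3 : partition (P 3) (dtuples V 3). Proof. by case: HS => c _; apply: c. Qed.
Let r1 : regularity 1 P. Proof. by case: HS => _ s; case: (s 1 isT isT). Qed.
Let i2 : invariance 2 P. Proof. by case: HS => _ s; case: (s 1 isT isT). Qed.
Let c2 : compatibility 2 P. Proof. by case: HS => _ s; case: (s 2 isT isT). Qed.
Let r2 : regularity 2 P. Proof. by case: HS => _ s; case: (s 2 isT isT). Qed.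

Lemma in_d2 C u : C \in P 2 -> u \in C -> u \in dtuples V 2.
Proof. by move=> PC; apply/subsetP; apply: partitionS p2 PC. Qed.

Lemma mk2_d2 x y : (mk2 x y \in dtuples V 2) = (x != y).
Proof. by rewrite inE /= inE andbT. Qed.

Lemma col_neq C x y : C \in P 2 -> mk2 x y \in C -> x != y.
Proof. by move=> PC /(in_d2 PC); rewrite mk2_d2. Qed.

Lemma Vne : exists v : V, true.
Proof.
have [Q EQ] := cards1P (introT eqP HH).
have PQ : Q \in P 1 by rewrite EQ set11.
have /set0Pn[t tQ] := partition_neq0 p1 PQ.
by exists (tnth t ord0).
Qed.

Lemma sc1 (u v : 1.-tuple V) : same_color (P 1) u v.
Proof.
have [Q EQ] := cards1P (introT eqP HH).
have inQ (w : 1.-tuple V) : w \in Q.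
  have : w \in cover (P 1) by rewrite (cover_partition p1) inE; case: w => -[|x []].
  by case/bigcupP => B; rewrite EQ inE => /eqP ->.
by apply/existsP; exists Q; rewrite EQ set11 !inQ.
Qed.

Definition G := (@rel_of_color V) @: P 2 :|: [set id_rel V].

Lemma partG : partition G [set: V * V].
Proof.
apply/and3P; split.
- apply/eqP/setP => -[x y]; rewrite inE; apply/bigcupP.
  case: (eqVneq x y) => [->|nxy].
    exists (id_rel V); first by rewrite !inE eqxx orbT.
    by rewrite inE /=.
  have : mk2 x y \in cover (P 2) by rewrite (cover_partition p2) mk2_d2.
  case/bigcupP => C PC uC; exists (rel_of_color C).
    by rewrite inE imset_f.
  by rewrite rel_of_colorE.
- apply/trivIsetP => A B; rewrite !inE.
  move=> /orP[/imsetP[C PC ->]|/eqP->] /orP[/imsetP[C' PC' ->]|/eqP->] neq //.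
  + rewrite -setI_eq0; apply/eqP/setP => -[x y]; rewrite !inE !rel_of_colorE.
    apply/negP => /andP[h1 h2]; move/negP: neq; apply.
    by rewrite (block_eq p2 PC PC' h1 h2).
  + rewrite -setI_eq0; apply/eqP/setP => -[x y]; rewrite !inE !rel_of_colorE /=.
    by apply/negP => /andP[/(col_neq PC) /negbTE ->].
  + rewrite -setI_eq0; apply/eqP/setP => -[x y]; rewrite !inE !rel_of_colorE /=.
    by apply/negP => /andP[/eqP -> /(col_neq PC') /negP].
  + by rewrite eqxx in neq.
- rewrite !inE negb_or; apply/andP; split.
    apply/imsetP => -[C PC E].
    have /set0Pn[u uC] := partition_neq0 p2 PC.
    have : (tnth u ord0, tnth u ord_max) \in rel_of_color C by rewrite rel_of_colorE -tuple2E.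
    by rewrite -E inE.
  have [v _] := Vne; apply/eqP => E.
  have : (v, v) \in id_rel V by rewrite inE /=.
  by rewrite -E inE.
Qed.

Lemma mem_sw (C : {set 2.-tuple V}) x y :
  (mk2 x y \in permtup sw @: C) = (mk2 y x \in C).
Proof.
apply/imsetP/idP => [[t tC]|H]; last by exists (mk2 y x); rewrite ?permtup_sw.
move: tC; rewrite (tuple2E t) permtup_sw => tC /mk2_inj[-> ->].
by [].
Qed.

Lemma count_id_l (g : {set V * V}) (a b : V) :
  #|[set c | ((a, c) \in id_rel V) && ((c, b) \in g)]| = ((a, b) \in g).
Proof.
case gab: ((a, b) \in g).
  transitivity #|[set a]|; last by rewrite cards1.
  apply: eq_card => c; rewrite !inE /=.
  by apply/andP/eqP => [[/eqP <-]|->] //.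
transitivity #|(set0 : {set V})|; last by rewrite cards0.
apply: eq_card => c; rewrite !inE /=.
by apply/andP => -[/eqP <-]; rewrite gab.
Qed.

Lemma count_id_r (f : {set V * V}) (a b : V) :
  #|[set c | ((a, c) \in f) && ((c, b) \in id_rel V)]| = ((a, b) \in f).
Proof.
case gab: ((a, b) \in f).
  transitivity #|[set b]|; last by rewrite cards1.
  apply: eq_card => c; rewrite !inE /=.
  by apply/andP/eqP => [[_ /eqP]|->] //.
transitivity #|(set0 : {set V})|; last by rewrite cards0.
apply: eq_card => c; rewrite !inE /=.
by apply/andP => -[+ /eqP E]; rewrite E gab.
Qed.


Lemma transG g : g \in G -> transpose_rel g \in G.
Proof.
rewrite !inE => /orP[/imsetP[C PC ->]|/eqP->].
  apply/orP; left; apply/imsetP; exists (permtup sw @: C); first exact: i2.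
  by apply/setP => -[x y]; rewrite !inE /= !rel_of_colorE mem_sw.
apply/orP; right; apply/eqP/setP => -[x y]; rewrite !inE /=.
by rewrite eq_sym.
Qed.

Lemma count_colE (Cf Cg : {set 2.-tuple V}) a b :
  [set c | ((a, c) \in rel_of_color Cf) && ((c, b) \in rel_of_color Cg)] =
  [set c | (mk2 a c \in Cf) && (mk2 c b \in Cg)].
Proof. by apply/setP => c; rewrite !inE !rel_of_colorE. Qed.

Lemma count_diag Cf Cg a a' : Cf \in P 2 -> Cg \in P 2 ->
  #|[set c | (mk2 a c \in Cf) && (mk2 c a \in Cg)]| =
  #|[set c | (mk2 a' c \in Cf) && (mk2 c a' \in Cg)]|.
Proof.
move=> PCf PCg.
set Cg' := permtup sw @: Cg.
have PCg' : Cg' \in P 2 by apply: i2.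
have E x : #|[set c | (mk2 x c \in Cf) && (mk2 c x \in Cg)]| =
           #|[set u in Cf | (deltup u ord_max == mk1 x) && (u \in Cg')]|.
  have inj : injective (@mk2 V x) by move=> c c' /mk2_inj[].
  rewrite -(card_imset _ inj); apply: eq_card => u; rewrite inE.
  apply/imsetP/idP => [[c]|].
    by rewrite !inE => /andP[h1 h2] ->; rewrite h1 del2_1 eqxx mem_sw h2.
  case/and3P => uC /eqP e uG.
  have Eu := tuple2E u; rewrite Eu del2_1 in e; move/mk1_inj: e => e.
  exists (tnth u ord_max); last by rewrite Eu e.
  by rewrite inE -e -Eu uC /= -mem_sw -Eu.
rewrite !E; apply: const_card.
  by move=> u u' uC u'C; apply: same_color_mem p2 PCg' _;
     apply/existsP; exists Cf; rewrite PCf uC u'C.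
by apply: r1 => //; apply: sc1.
Qed.

Lemma count_off Cf Cg Ch a b a' b' : Cf \in P 2 -> Cg \in P 2 -> Ch \in P 2 ->
  mk2 a b \in Ch -> mk2 a' b' \in Ch ->
  #|[set c | (mk2 a c \in Cf) && (mk2 c b \in Cg)]| =
  #|[set c | (mk2 a' c \in Cf) && (mk2 c b' \in Cg)]|.
Proof.
move=> PCf PCg PCh abh abh'.
pose p (t : 3.-tuple V) := (deltup t ord_max \in Cf) && (deltup t ord0 \in Cg).
have E x y : mk2 x y \in Ch -> #|[set c | (mk2 x c \in Cf) && (mk2 c y \in Cg)]| =
    \sum_(T in P 3) #|[set t in T | (deltup t (inord 1) == mk2 x y) && p t]|.
  move=> xyh.
  have inj : injective (fun c => mk3 x c y) by move=> c c' /(congr1 val) [].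
  rewrite -(card_imset _ inj).
  set S := [set t in dtuples V 3 | (deltup t (inord 1) == mk2 x y) && p t].
  transitivity #|S|; last first.
    rewrite (card_split p3 (_ : S \subset _)); last by apply/subsetP => t; rewrite inE => /andP[].
    apply: eq_bigr => T PT; apply: eq_card => t; rewrite !inE.
    case tT: (t \in T); last by rewrite andbF.
    have := subsetP (partitionS p3 PT) t tT; rewrite /dtuples inE => ut. by rewrite ut andbT.
  apply: eq_card => t; rewrite inE.
  apply/imsetP/idP => [[c]|].
    rewrite !inE => /andP[h1 h2] ->; rewrite /p del3_0 del3_1 del3_2 h1 h2 eqxx andbT /=.
    have := col_neq PCf h1; have := col_neq PCg h2; have := col_neq PCh xyh.
    by rewrite !inE !negb_or !andbT => -> -> ->.
  case/and3P => _ /eqP e pt.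
  have [x0 [y0 [z0 Et]]] := tuple3E t.
  move: e pt; rewrite Et /p del3_0 del3_1 del3_2 => /mk2_inj[-> ->] /andP[h1 h2].
  by exists y0; rewrite // inE h1 h2.
rewrite (E _ _ abh) (E _ _ abh'); apply: eq_bigr => T PT.
apply: const_card.
  move=> t t' tT t'T.
  have sc : same_color (P 3) t t' by apply/existsP; exists T; rewrite PT tT t'T.
  rewrite /p (same_color_mem p2 PCf (c2 sc ord_max)).
  by rewrite (same_color_mem p2 PCg (c2 sc ord0)).
by apply: r2 => //; apply/existsP; exists Ch; rewrite PCh abh abh'.
Qed.

Lemma main : is_association_scheme G.
Proof.
split.
- exact: partG.
- by rewrite !inE eqxx orbT.
- exact: transG.
move=> f g h Gf Gg Gh a b a' b' abh abh'.
have scG : same_color G (a, b) (a', b') by apply/existsP; exists h; rewrite Gh abh abh'.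
move: Gf; rewrite !inE => /orP[/imsetP[Cf PCf ->]|/eqP->]; last first.
  by rewrite !count_id_l (same_color_mem partG Gg scG).
move: Gg; rewrite !inE => /orP[/imsetP[Cg PCg ->]|/eqP->]; last first.
  by rewrite !count_id_r (same_color_mem partG _ scG) // inE imset_f.
rewrite !count_colE.
move: Gh abh abh'; rewrite !inE => /orP[/imsetP[Ch PCh ->]|/eqP->].
  rewrite !rel_of_colorE => abh abh'; exact: count_off PCh abh abh'.
rewrite !inE /= => /eqP <- /eqP <-; exact: count_diag.
Qed.

End Main.

Theorem lemma2p3 (V : finType) (P : forall s, {set {set s.-tuple V}}) :
  is_scheme 3 P -> homogeneous P ->
  is_association_scheme
    ((@rel_of_color V) @: P 2 :|: [set id_rel V]).
Proof. move=> HS HH; exact: (main HS HH). Qed.
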